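(* Let $\mu,\nu\in\mathbb{R}$, let $U_\sigma=U_\sigma(so_{\mu,\nu}(2,2))$ with coproduct $\Delta$ be as in the context, and define $$\mathcal P=\frac{e^{\sigma P}-1}{\sigma},\quad \mathcal H=H,\quad \mathcal K=K,\quad \mathcal D=D,\quad \mathcal C_1=C_1,\quad \mathcal C_2=C_2+\sigma\mu D^2.$$ Then these elements satisfy the undeformed relations $[\mathcal K,\mathcal H]=\nu\mathcal P$, $[\mathcal K,\mathcal P]=\mu\mathcal H$, $[\mathcal H,\mathcal P]=0$, $[\mathcal D,\mathcal H]=\mathcal H$, $[\mathcal D,\mathcal C_1]=-\mathcal C_1$, $[\mathcal H,\mathcal C_1]=-2\nu\mathcal D$, $[\mathcal D,\mathcal P]=\mathcal P$, $[\mathcal D,\mathcal C_2]=-\mathcal C_2$, $[\mathcal P,\mathcal C_2]=2\mu\mathcal D$, $[\mathcal K,\mathcal C_1]=\nu\mathcal C_2$, $[\mathcal K,\mathcal C_2]=\mu\mathcal C_1$, $[\mathcal K,\mathcal D]=0$, $[\mathcal H,\mathcal C_2]=2\mathcal K$, $[\mathcal P,\mathcal C_1]=-2\mathcal K$, $[\mathcal C_1,\mathcal C_2]=0$, and their coproducts are $$\Delta(\mathcal P)=1\otimes\mathcal P+\mathcal P\otimes 1+\sigma\mathcal P\otimes\mathcal P,\qquad \Delta(\mathcal H)=1\otimes\mathcal H+\mathcal H\otimes 1+\sigma\mathcal H\otimes\mathcal P,$$ $$\Delta(\mathcal D)=1\otimes\mathcal D+\mathcal D\otimes\frac{1}{1+\sigma\mathcal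 P},\qquad \Delta(\mathcal K)=1\otimes\mathcal K+\mathcal K\otimes 1-\sigma\mu\,\mathcal D\otimes\frac{\mathcal H}{1+\sigma\mathcal P},$$ $$\Delta(\mathcal C_1)=1\otimes\mathcal C_1+\mathcal C_1\otimes\frac{1}{1+\sigma\mathcal P}-2\sigma\,\mathcal D\otimes\frac{1}{1+\sigma\mathcal P}\mathcal K+\sigma^2\mu(\mathcal D^2+\mathcal D)\otimes\frac{\mathcal H}{(1+\sigma\mathcal P)^2},$$ $$\Delta(\mathcal C_2)=1\otimes\mathcal C_2+\mathcal C_2\otimes\frac{1}{1+\sigma\mathcal P}+2\sigma\mu\,\mathcal D\otimes\frac{1}{1+\sigma\mathcal P}\mathcal D-\sigma\mu(\mathcal D^2+\mathcal D)\otimes\frac{\sigma\mathcal P}{(1+\sigma\mathcal P)^2}.$$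
   Context: $U_\sigma(so_{\mu,\nu}(2,2))$ denotes the $\sigma$-adically completed associative algebra over $\mathbb{R}[[\sigma]]$ generated by $H,P,K,D,C_1,C_2$ subject to the relations $[K,H]=\nu\frac{e^{\sigma P}-1}{\sigma}$, $[K,P]=\mu e^{-\sigma P}H$, $[H,P]=0$, $[K,D]=0$, $[D,H]=H$, $[D,C_1]=-C_1$, $[H,C_1]=-2\nu D$, $[D,P]=\frac{1-e^{-\sigma P}}{\sigma}$, $[D,C_2]=-C_2-\sigma\mu D^2$, $[P,C_2]=2\mu D$, $[K,C_1]=\nu C_2+\sigma\mu\nu D^2$, $[K,C_2]=\mu C_1$, $[P,C_1]=-e^{-\sigma P}K-Ke^{-\sigma P}$, $[H,C_2]=2K+\sigma\mu(DH+HD)$, $[C_1,C_2]=-\sigma\mu(DC_1+C_1D)$. Its coproduct $\Delta$ is the algebra homomorphism determined by $\Delta(P)=1\otimes P+P\otimes 1$, $\Delta(D)=1\otimes D+D\otimes e^{-\sigma P}$, $\Delta(H)=1\otimes H+H\otimes e^{\sigma P}$, $\Delta(C_2)=1\otimes C_2+C_2\otimes e^{-\sigma P}$, $\Delta(K)=1\otimes K+K\otimes 1-\sigma\mu D\otimes e^{-\sigma P}H$, $\Delta(C_1)=1\otimes C_1+C_1\otimes e^{-\sigma P}-2\sigma D\otimes e^{-\sigma P}K+\sigma^2\mu(D^2+D)\otimes e^{-2\sigma P}H$. Note $1+\sigma\mathcal P=e^{\sigma P}$ is invertible. *)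

(* Defs.v *)
From HB Require Import structures.
From mathcomp Require Import all_boot all_order all_algebra.
From mathcomp Require Import reals.
Set Implicit Arguments. Unset Strict Implicit. Unset Printing Implicit Defensive.
Import Order.TTheory GRing.Theory Num.Theory.
Local Open Scope ring_scope.

Definition lie (T : pzRingType) (x y : T) : T := x * y - y * x.

Section SigmaAdic.
Variables (R : realType) (A : algType R) (s : A).

(* s is central (it plays the role of the formal parameter sigma). *)
Definition central : Prop := forall x : A, s * x = x * s.

Definition sdiv (k : nat) (x : A) : Prop := exists y : A, x = s ^+ k * y.

Definition sconv (u : nat -> A) (x : A) : Prop :=
  forall k, exists N, forall n, (N <= n)%N -> sdiv k (x - u n).

Definition ssum (f : nat -> A) (x : A) : Prop :=
  sconv (fun N => \sum_(n < N) f n) x.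

Definition sseparated : Prop := forall x : A, (forall k, sdiv k x) -> x = 0.

Definition scomplete : Prop :=
  forall u : nat -> A,
    (forall k, exists N, forall m n, (N <= m)%N -> (N <= n)%N -> sdiv k (u m - u n)) ->
    exists x, sconv u x.

(* A is a sigma-adically complete (and separated) R[[sigma]]-algebra. *)
Definition sadic_algebra : Prop := [/\ central, sseparated & scomplete].

End SigmaAdic.

Definition alg_hom (R : realType) (A B : algType R) (f : A -> B) : Prop :=
  [/\ forall x y, f (x + y) = f x + f y,
      forall x y, f (x * y) = f x * f y,
      f 1 = 1 &
      forall (a : R) x, f (a *: x) = a *: f x].

(* terms of the series exp(c s X) = sum_n c^n s^n X^n / n!  and
   (exp(c s X) - 1)/(c s) = sum_n c^n s^n X^(n+1) / (n+1)!  (c = 1 or -1) *)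
Definition exp_term (R : realType) (A : algType R) (c : R) (s X : A) (n : nat) : A :=
  (c ^+ n / (n`!)%:R) *: (s ^+ n * X ^+ n).
Definition expm1_div_term (R : realType) (A : algType R) (c : R) (s X : A) (n : nat) : A :=
  (c ^+ n / (n.+1`!)%:R) *: (s ^+ n * X ^+ n.+1).

(* Main.v *)
Require Import Defs.
From HB Require Import structures.
From mathcomp Require Import all_boot all_order all_algebra.
From mathcomp Require Import reals.
From mathcomp Require Import ring lra zify.
Import Order.TTheory GRing.Theory Num.Theory.
Local Open Scope ring_scope.
Set Implicit Arguments. Unset Strict Implicit. Unset Printing Implicit Defensive.

Section Sadic.
Variables (R : realType) (A : algType R) (s : A).
Hypothesis hc : central s.

Lemma sexpC n x : s ^+ n * x = x * s ^+ n.
Proof.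
elim: n => [|n IH]; first by rewrite expr0 mul1r mulr1.
by rewrite exprS -mulrA IH mulrA hc -mulrA.
Qed.

Lemma sdiv0 k : sdiv s k 0.
Proof. by exists 0; rewrite mulr0. Qed.
Lemma sdivD k x y : sdiv s k x -> sdiv s k y -> sdiv s k (x + y).
Proof. by move=> [a ->] [b ->]; exists (a + b); rewrite mulrDr. Qed.
Lemma sdivN k x : sdiv s k x -> sdiv s k (- x).
Proof. by move=> [a ->]; exists (- a); rewrite mulrN. Qed.
Lemma sdivB k x y : sdiv s k x -> sdiv s k y -> sdiv s k (x - y).
Proof. by move=> hx hy; apply: sdivD => //; apply: sdivN. Qed.
Lemma sdivMr k x y : sdiv s k x -> sdiv s k (x * y).
Proof. by move=> [a ->]; exists (a * y); rewrite mulrA. Qed.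
Lemma sdivMl k x y : sdiv s k x -> sdiv s k (y * x).
Proof. by move=> [a ->]; exists (y * a); rewrite mulrA -sexpC -mulrA. Qed.
Lemma sdivZ k (c : R) x : sdiv s k x -> sdiv s k (c *: x).
Proof. by move=> [a ->]; exists (c *: a); rewrite scalerAr. Qed.
Lemma sdiv_le j k x : (j <= k)%N -> sdiv s k x -> sdiv s j x.
Proof.
by move=> hjk [a ->]; exists (s ^+ (k - j) * a); rewrite mulrA -exprD subnKC.
Qed.
Lemma sdivX k x : sdiv s k (s ^+ k * x).
Proof. by exists x. Qed.
Lemma sdivM i j x y : sdiv s i x -> sdiv s j y -> sdiv s (i + j) (x * y).
Proof.
move=> [a ->] [b ->]; exists (a * b).
by rewrite exprD -!mulrA; congr (_ * _); rewrite !mulrA sexpC.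
Qed.
Lemma sdiv_sum k (I : Type) (r : seq I) (P : pred I) (F : I -> A) :
  (forall i, P i -> sdiv s k (F i)) -> sdiv s k (\sum_(i <- r | P i) F i).
Proof.
move=> h; elim/big_ind: _ => //; [exact: sdiv0| exact: sdivD].
Qed.

Lemma sconv_ext u v x : (forall n, u n = v n) -> sconv s u x -> sconv s v x.
Proof. by move=> e h k; have [N hN] := h k; exists N => n /hN; rewrite e. Qed.

Lemma sconv_near u v x : sconv s u x ->
  (forall k, exists N, forall n, (N <= n)%N -> sdiv s k (u n - v n)) -> sconv s v x.
Proof.
move=> hu huv k; have [N1 h1] := hu k; have [N2 h2] := huv k.
exists (maxn N1 N2) => n hn.
have -> : x - v n = (x - u n) + (u n - v n) by rewrite addrA subrK.
apply: sdivD; [apply: h1|apply: h2]; apply: leq_trans hn;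
  [exact: leq_maxl|exact: leq_maxr].
Qed.

Lemma sconv_cst x : sconv s (fun=> x) x.
Proof. by move=> k; exists 0%N => n _; rewrite subrr; apply: sdiv0. Qed.

Lemma sconvD u v x y : sconv s u x -> sconv s v y ->
  sconv s (fun n => u n + v n) (x + y).
Proof.
move=> hu hv k; have [N1 h1] := hu k; have [N2 h2] := hv k.
exists (maxn N1 N2) => n hn; rewrite opprD addrACA.
apply: sdivD; [apply: h1|apply: h2]; apply: leq_trans hn;
  [exact: leq_maxl|exact: leq_maxr].
Qed.

Lemma sconvM u v x y : sconv s u x -> sconv s v y ->
  sconv s (fun n => u n * v n) (x * y).
Proof.
move=> hu hv k; have [N1 h1] := hu k; have [N2 h2] := hv k.
exists (maxn N1 N2) => n hn.
have -> : x * y - u n * v n = (x - u n) * y + u n * (y - v n).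
  by rewrite mulrBl mulrBr addrA subrK.
apply: sdivD; [apply: sdivMr; apply: h1|apply: sdivMl; apply: h2];
  apply: leq_trans hn; [exact: leq_maxl|exact: leq_maxr].
Qed.

Lemma sconvN u x : sconv s u x -> sconv s (fun n => - u n) (- x).
Proof.
by move=> hu k; have [N h] := hu k; exists N => n /h; rewrite -opprD; apply: sdivN.
Qed.

Lemma sconvZ (c : R) u x : sconv s u x -> sconv s (fun n => c *: u n) (c *: x).
Proof.
by move=> hu k; have [N h] := hu k; exists N => n /h; rewrite -scalerBr; apply: sdivZ.
Qed.

Lemma sconv_unshift u x : sconv s (fun n => u n.+1) x -> sconv s u x.
Proof.
move=> h k; have [N hN] := h k; exists N.+1 => -[//|n] hn; exact: hN.
Qed.


Lemma ssum_ext f g x : (forall n, f n = g n) -> ssum s f x -> ssum s g x.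
Proof. by move=> e; apply: sconv_ext => N; apply: eq_bigr => i _; exact: e. Qed.

Lemma ssum0 : ssum s (fun=> 0) 0.
Proof. by apply: sconv_ext (sconv_cst 0) => N; rewrite big1. Qed.

Lemma ssumD f g x y : ssum s f x -> ssum s g y -> ssum s (fun n => f n + g n) (x + y).
Proof. by move=> hf hg; apply: sconv_ext (sconvD hf hg) => N; rewrite big_split. Qed.
Lemma ssumN f x : ssum s f x -> ssum s (fun n => - f n) (- x).
Proof. by move=> hf; apply: sconv_ext (sconvN hf) => N; rewrite sumrN. Qed.
Lemma ssumB f g x y : ssum s f x -> ssum s g y -> ssum s (fun n => f n - g n) (x - y).
Proof. by move=> hf hg; apply: ssumD hf (ssumN hg). Qed.
Lemma ssumZ c f x : ssum s f x -> ssum s (fun n => c *: f n) (c *: x).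
Proof. by move=> hf; apply: sconv_ext (sconvZ c hf) => N; rewrite scaler_sumr. Qed.
Lemma ssumMl c f x : ssum s f x -> ssum s (fun n => c * f n) (c * x).
Proof. by move=> hf; apply: sconv_ext (sconvM (sconv_cst c) hf) => N /=; rewrite mulr_sumr. Qed.
Lemma ssumMr c f x : ssum s f x -> ssum s (fun n => f n * c) (x * c).
Proof. by move=> hf; apply: sconv_ext (sconvM hf (sconv_cst c)) => N /=; rewrite mulr_suml. Qed.
Lemma ssum_cons c f x : ssum s f x ->
  ssum s (fun n => if n is m.+1 then f m else c) (c + x).
Proof.
move=> hf; apply: sconv_unshift; apply: sconv_ext (sconvD (sconv_cst c) hf) => N /=.
by rewrite big_ord_recl.
Qed.

Lemma partial_tail (b : nat -> A) M d : (forall n, sdiv s n (b n)) ->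
  sdiv s M (\sum_(j < (M + d)%N) b j - \sum_(j < M) b j).
Proof.
move=> hb; elim: d => [|d IH]; first by rewrite addn0 subrr; apply: sdiv0.
rewrite addnS big_ord_recr /= addrAC; apply: sdivD => //.
by apply: sdiv_le (hb _); exact: leq_addr.
Qed.

Lemma cauchy_id (a b : nat -> A) N :
  \sum_(n < N) \sum_(i < n.+1) a i * b (n - i)%N = \sum_(i < N) a i * \sum_(j < (N - i)%N) b j.
Proof.
elim: N => [|N IH]; first by rewrite !big_ord0.
rewrite big_ord_recr /= IH [X in _ + X = _]big_ord_recr /= subnn.
rewrite [RHS]big_ord_recr /= subSnn big_ord1 addrA; congr (_ + _).
rewrite -big_split /=; apply: eq_bigr => i _.
by rewrite subSn ?(ltnW (ltn_ord i)) // big_ord_recr /= mulrDr.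
Qed.

Lemma ssum_cauchy a b x y : (forall n, sdiv s n (a n)) -> (forall n, sdiv s n (b n)) ->
  ssum s a x -> ssum s b y ->
  ssum s (fun n => \sum_(i < n.+1) a i * b (n - i)%N) (x * y).
Proof.
move=> ha hb hx hy; apply: sconv_near (sconvM hx hy) _ => k.
exists k => N hN; apply: (sdiv_le hN).
rewrite cauchy_id big_distrl /= -sumrB.
apply: sdiv_sum => i _; rewrite -mulrBr.
have := sdivM (ha i) (partial_tail (N - i) i hb).
by rewrite subnK ?subnKC // ltnW.
Qed.

Hypothesis hsep : sseparated s.

Lemma sconv_unique u x y : sconv s u x -> sconv s u y -> x = y.
Proof.
move=> hx hy; apply/eqP; rewrite -subr_eq0; apply/eqP; apply: hsep => k.
have [N1 h1] := hx k; have [N2 h2] := hy k.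
have := sdivB (h1 _ (leq_maxl N1 N2)) (h2 _ (leq_maxr N1 N2)).
by rewrite opprB addrA subrK.
Qed.

Lemma ssum_unique f x y : ssum s f x -> ssum s f y -> x = y.
Proof. exact: sconv_unique. Qed.

End Sadic.

Section Hom.
Variables (R : realType) (A B : algType R) (f : A -> B) (s : A) (sB : B).
Hypothesis hf : alg_hom f.
Hypothesis hfs : f s = sB.

Lemma homD x y : f (x + y) = f x + f y. Proof. by case: hf. Qed.
Lemma homM x y : f (x * y) = f x * f y. Proof. by case: hf. Qed.
Lemma hom1 : f 1 = 1. Proof. by case: hf. Qed.
Lemma homZ (c : R) x : f (c *: x) = c *: f x. Proof. by case: hf. Qed.
Lemma hom0 : f 0 = 0.
Proof. by rewrite -(scale0r (0 : A)) homZ scale0r. Qed.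
Lemma homN x : f (- x) = - f x.
Proof. by rewrite -scaleN1r homZ scaleN1r. Qed.
Lemma homB x y : f (x - y) = f x - f y.
Proof. by rewrite homD homN. Qed.
Lemma homX x n : f (x ^+ n) = f x ^+ n.
Proof. by elim: n => [|n IH]; rewrite ?expr0 ?hom1 // !exprS homM IH. Qed.
Lemma hom_sum N (F : nat -> A) : f (\sum_(i < N) F i) = \sum_(i < N) f (F i).
Proof. exact: (big_morph f homD hom0). Qed.
Lemma sdiv_hom k x : sdiv s k x -> sdiv sB k (f x).
Proof. by move=> [a ->]; exists (f a); rewrite homM homX hfs. Qed.
Lemma ssum_hom F x : ssum s F x -> ssum sB (fun n => f (F n)) (f x).
Proof.
move=> h k; have [N hN] := h k; exists N => n /hN /sdiv_hom.
by rewrite homB hom_sum.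
Qed.
End Hom.

Section Lie.
Variables (R : realType) (A : algType R).
Implicit Types x y z : A.
Lemma lie_eq x y z : lie x y = z -> x * y = y * x + z.
Proof. by rewrite /lie => <-; rewrite addrC subrK. Qed.
Lemma lieMr x y z : lie x (y * z) = lie x y * z + y * lie x z.
Proof. by rewrite /lie mulrBl mulrBr !mulrA addrA subrK. Qed.
Lemma lieMl x y z : lie (x * y) z = x * lie y z + lie x z * y.
Proof. by rewrite /lie mulrBr mulrBl !mulrA addrA subrK. Qed.
Lemma lieN x y : lie x y = - lie y x.
Proof. by rewrite /lie opprB. Qed.
Lemma lieZr x (c : R) y : lie x (c *: y) = c *: lie x y.
Proof. by rewrite /lie -scalerAr -scalerAl scalerBr. Qed.
Lemma lieZl x (c : R) y : lie (c *: x) y = c *: lie x y.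
Proof. by rewrite /lie -scalerAr -scalerAl scalerBr. Qed.

Lemma lieX1 (X P Z : A) : lie X P = Z -> P * Z = Z * P ->
  forall n, lie X (P ^+ n.+1) = P ^+ n * Z *+ n.+1.
Proof.
move=> hXP hPZ; elim=> [|n IH]; first by rewrite expr1 expr0 mul1r.
rewrite exprSr lieMr IH hXP mulrnAl -mulrA -hPZ mulrA -exprSr.
by rewrite -mulrSr.
Qed.

Lemma zid (V : zmodType) (a b : V) n :
  a *+ n.+1 - b *+ (n.+1 * n) + (a + (- (b *+ 2)) *+ n.+1)
  = a *+ n.+2 - b *+ (n.+2 * n.+1).
Proof.
rewrite mulNrn -mulrnA addrACA -mulrSr -opprD -mulrnDr.
congr (_ - _ *+ _); rewrite !mulSn !mulnS; lia.
Qed.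

Lemma lieX2 (P X F G : A) : lie P X = F -> lie P F = G *+ 2 -> P * G = G * P ->
  forall n, lie (P ^+ n.+1) X = P ^+ n * F *+ n.+1 - P ^+ n.-1 * G *+ (n.+1 * n).
Proof.
move=> hPX hPF hPG.
have hFP : lie F P = - (G *+ 2) by rewrite lieN hPF.
have hPG2 : P * (- (G *+ 2)) = (- (G *+ 2)) * P.
  by rewrite mulrN mulNr mulrnAr mulrnAl hPG.
have h1 := lieX1 hFP hPG2.
elim=> [|n IH]; first by rewrite expr1 expr0 mul1r muln0 mulr0n subr0.
have e : P * P ^+ n.-1 * G *+ (n.+1 * n) = P ^+ n * G *+ (n.+1 * n).
  by case: n {IH} => [|n]; rewrite ?muln0 ?mulr0n // -exprS.
rewrite exprS lieMl IH hPX (lie_eq (h1 n)) mulrBr !mulrnAr !mulrA e.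
rewrite mulrN mulrnAr -exprS /=.
exact: zid.
Qed.
End Lie.

Lemma fact_neq0 (R : realType) n : (n`!)%:R != 0 :> R.
Proof. by rewrite pnatr_eq0 -lt0n fact_gt0. Qed.

Lemma natS_neq0 (R : realType) n : (n.+1)%:R != 0 :> R.
Proof. by rewrite pnatr_eq0. Qed.

Lemma binR (R : realType) n i : (i <= n)%N ->
  ('C(n, i))%:R = (n`!)%:R / ((i`!)%:R * ((n - i)`!)%:R) :> R.
Proof.
move=> h; rewrite -(bin_fact h) !natrM mulfK //.
by rewrite mulf_neq0 // fact_neq0.
Qed.

Section Series.
Variables (R : realType) (A : algType R) (s : A).
Hypothesis hc : central s.
Hypothesis hsep : sseparated s.

Lemma sdiv_term (c : R) (P : A) n m : sdiv s n (c *: (s ^+ n * P ^+ m)).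
Proof. by apply: sdivZ; apply: sdivX. Qed.

Lemma termC (Y P : A) (c : R) n m : Y * P = P * Y ->
  Y * (c *: (s ^+ n * P ^+ m)) = (c *: (s ^+ n * P ^+ m)) * Y.
Proof.
move=> hYP; rewrite -scalerAl -scalerAr; congr (_ *: _).
rewrite mulrA -(sexpC hc) -!mulrA; congr (_ * _).
by have := commrX m hYP.
Qed.

Lemma ssum_commute (Y : A) f F : (forall n, Y * f n = f n * Y) ->
  ssum s f F -> Y * F = F * Y.
Proof.
move=> hY hF; apply: (ssum_unique hsep (ssumMl hc Y hF)).
by apply: ssum_ext (ssumMr hc Y hF) => n; rewrite hY.
Qed.

Lemma ssum_lie_r (X : A) f F : ssum s f F -> ssum s (fun n => lie X (f n)) (lie X F).
Proof. by move=> hF; exact: ssumB (ssumMl hc X hF) (ssumMr hc X hF). Qed.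
Lemma ssum_lie_l (X : A) f F : ssum s f F -> ssum s (fun n => lie (f n) X) (lie F X).
Proof. by move=> hF; exact: ssumB (ssumMr hc X hF) (ssumMl hc X hF). Qed.

Lemma lieS_r (X : A) n y : lie X (s ^+ n * y) = s ^+ n * lie X y.
Proof. by rewrite /lie mulrBr !mulrA (sexpC hc n X). Qed.
Lemma lieS_l (X : A) n y : lie (s ^+ n * y) X = s ^+ n * lie y X.
Proof. by rewrite /lie mulrBr !mulrA (sexpC hc n X). Qed.

Lemma termM (P : A) (a b : R) i j m k :
  (a *: (s ^+ i * P ^+ m)) * (b *: (s ^+ j * P ^+ k))
  = (a * b) *: (s ^+ (i + j) * P ^+ (m + k)).
Proof.
rewrite -scalerAl -scalerAr scalerA; congr (_ *: _).
rewrite !exprD -!mulrA; congr (_ * _).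
by rewrite !mulrA (sexpC hc j).

Qed.

End Series.


Lemma R1 (R : realType) n : \sum_(i < n.+2) (((1:R) ^+ i / (i`!)%:R) *
   ((-1) ^+ (n.+1 - i) / ((n.+1 - i)`!)%:R)) = 0.
Proof.
have h : ((-1 + 1 : R) ^+ n.+1) = 0 by rewrite addNr expr0n.
rewrite exprDn in h.
have -> : \sum_(i < n.+2) (((1:R) ^+ i / (i`!)%:R) *
   ((-1) ^+ (n.+1 - i) / ((n.+1 - i)`!)%:R)) =
  (\sum_(i < n.+2) ((-1) ^+ (n.+1 - i) * 1 ^+ i) *+ 'C(n.+1, i)) / (n.+1)`!%:R.
  rewrite mulr_suml; apply: eq_bigr => i _.
  have hi : (i <= n.+1)%N by rewrite -ltnS.
  rewrite -[_ *+ 'C(_, _)]mulr_natr (binR _ hi); field.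
  by rewrite ?fact_neq0 ?nat1r ?natS_neq0 -?natrD ?pnatr_eq0.
by rewrite h mul0r.
Qed.

Lemma R2 (R : realType) n : \sum_(i < n.+1) (((1:R) ^+ i / (i`!)%:R) *
   ((-1) ^+ (n - i) / (((n - i).+1)`!)%:R)) = 1 ^+ n / ((n.+1)`!)%:R.
Proof.
set S := \sum_(i < n.+1) ((-1) ^+ (n.+1 - i) * (1:R) ^+ i) *+ 'C(n.+1, i).
have hS : S = -1.
  have h : ((-1 + 1 : R) ^+ n.+1) = 0 by rewrite addNr expr0n.
  rewrite exprDn big_ord_recr /= subnn expr0 mul1r expr1n binn mulr1n in h.
  by apply/eqP; rewrite -addr_eq0 h.
transitivity (- S / (n.+1)`!%:R); last by rewrite hS opprK expr1n.
rewrite /S -sumrN mulr_suml; apply: eq_bigr => i _.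
have hi : (i <= n)%N by rewrite -ltnS.
rewrite -[_ *+ 'C(_, _)]mulr_natr (binR _ (leqW hi)) subSn // exprS; field.
by rewrite ?fact_neq0 ?nat1r ?natS_neq0 -?natrD ?pnatr_eq0.
Qed.

Ltac nzt := rewrite ?fact_neq0 ?nat1r ?natS_neq0 -?natrD ?pnatr_eq0.

Section Series2.
Variables (R : realType) (A : algType R) (s : A).
Hypothesis hc : central s.
Hypothesis hsep : sseparated s.

Lemma lie_Pc (X P Z E Pc : A) : lie X P = Z -> P * Z = Z * P ->
  ssum s (exp_term 1 s P) E -> ssum s (expm1_div_term 1 s P) Pc -> lie X Pc = E * Z.
Proof.
move=> hXP hPZ hE hPc.
apply: (ssum_unique hsep (ssum_lie_r hc X hPc)).
apply: ssum_ext (ssumMr hc Z hE) => n.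
rewrite /exp_term /expm1_div_term lieZr (lieS_r hc) (lieX1 hXP hPZ).
rewrite -scalerAl mulrnAr -scaler_nat scalerA !mulrA; congr (_ *: _).
rewrite factS natrM expr1n; field.
by rewrite fact_neq0 nat1r natS_neq0.
Qed.

Lemma lie_Ei (X P Z Ei : A) : lie X P = Z -> P * Z = Z * P ->
  ssum s (exp_term (-1) s P) Ei -> lie X Ei = - (s * (Ei * Z)).
Proof.
move=> hXP hPZ hEi.
have h := ssum_cons 0 (ssumMl hc s (ssumN (ssumMr hc Z hEi))).
rewrite add0r in h; rewrite -mulrN.
apply: (ssum_unique hsep (ssum_lie_r hc X hEi)).
apply: ssum_ext h => -[|n].
  by rewrite /exp_term lieZr !expr0 mul1r /lie !mulr1 !mul1r subrr scaler0.
rewrite /exp_term lieZr (lieS_r hc) (lieX1 hXP hPZ).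
rewrite -scalerAl -scaleNr -scalerAr mulrnAr -scaler_nat scalerA exprS.
rewrite !mulrA; congr (_ *: _).
  rewrite factS natrM; field.
  by rewrite fact_neq0 nat1r natS_neq0.
by rewrite -exprS.
Qed.

Lemma lie2_Pc (P X F G E Pc : A) : lie P X = F -> lie P F = G *+ 2 -> P * G = G * P ->
  ssum s (exp_term 1 s P) E -> ssum s (expm1_div_term 1 s P) Pc ->
  lie Pc X = E * F - s * (E * G).
Proof.
move=> hPX hPF hPG hE hPc.
have h := ssum_cons 0 (ssumMl hc s (ssumMr hc G hE)).
rewrite add0r in h.
apply: (ssum_unique hsep (ssum_lie_l hc X hPc)).
apply: ssum_ext (ssumB (ssumMr hc F hE) h) => n.
rewrite /exp_term /expm1_div_term lieZl (lieS_l hc) (lieX2 hPX hPF hPG).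
case: n => [|n].
  by rewrite !expr0 !mul1r muln0 mulr0n mulr1n !subr0 -scalerAl mul1r.
rewrite mulrBr scalerBr; congr (_ - _).
  rewrite -scalerAl mulrnAr -scaler_nat scalerA !mulrA; congr (_ *: _).
  rewrite [(n.+2)`!]factS natrM !expr1n; field.
  by rewrite fact_neq0 -natrD pnatr_eq0.
rewrite -scalerAl -scalerAr mulrnAr -scaler_nat scalerA exprS /= !mulrA.
congr (_ *: _).
  rewrite !factS !natrM !expr1n; field.
  by nzt.
by rewrite -exprS.
Qed.

Lemma shift_E (P E Pc : A) : ssum s (exp_term 1 s P) E ->
  ssum s (expm1_div_term 1 s P) Pc -> E = 1 + s * Pc.
Proof.
move=> hE hPc; have h := ssum_cons 1 (ssumMl hc s hPc).
apply: (ssum_unique hsep hE); apply: ssum_ext h => -[|n].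
  by rewrite /exp_term !expr0 mul1r invr1 mulr1 scale1r.
by rewrite /exp_term /expm1_div_term -scalerAr mulrA -exprS !expr1n.
Qed.

Lemma shift_Ei (P Ei Q : A) : ssum s (exp_term (-1) s P) Ei ->
  ssum s (expm1_div_term (-1) s P) Q -> Ei = 1 - s * Q.
Proof.
move=> hE hQ; have h := ssum_cons 1 (ssumN (ssumMl hc s hQ)).
apply: (ssum_unique hsep hE); apply: ssum_ext h => -[|n].
  by rewrite /exp_term !expr0 mul1r invr1 mulr1 scale1r.
rewrite /exp_term /expm1_div_term -scalerAr mulrA -exprS -scaleNr.
by rewrite [(-1) ^+ n.+1]exprS mulN1r mulNr.
Qed.


Lemma EEi (P E Ei : A) : ssum s (exp_term 1 s P) E ->
  ssum s (exp_term (-1) s P) Ei -> E * Ei = 1.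
Proof.
move=> hE hEi.
have h := ssum_cauchy hc (fun n => sdiv_term s _ P n _) (fun n => sdiv_term s _ P n _) hE hEi.
have h1 := ssum_cons 1 (ssum0 s); rewrite addr0 in h1.
apply: (ssum_unique hsep h); apply: ssum_ext h1 => n.
rewrite (eq_bigr (fun i : 'I_n.+1 => (((1:R) ^+ i / (i`!)%:R) *
   ((-1) ^+ (n - i) / ((n - i)`!)%:R)) *: (s ^+ n * P ^+ n))); last first.
  by move=> i _; rewrite /exp_term (termM hc) subnKC // -ltnS.
rewrite -scaler_suml.
case: n => [|n]; last by rewrite R1 scale0r.
by rewrite big_ord1 /= !expr0 !mul1r invr1 mulr1 scale1r.
Qed.


Lemma EQ_Pc (P E Q Pc : A) : ssum s (exp_term 1 s P) E ->
  ssum s (expm1_div_term (-1) s P) Q -> ssum s (expm1_div_term 1 s P) Pc -> E * Q = Pc.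
Proof.
move=> hE hQ hPc.
have h := ssum_cauchy hc (fun n => sdiv_term s _ P n _) (fun n => sdiv_term s _ P n _) hE hQ.
apply: (ssum_unique hsep h); apply: ssum_ext hPc => n.
rewrite (eq_bigr (fun i : 'I_n.+1 => (((1:R) ^+ i / (i`!)%:R) *
   ((-1) ^+ (n - i) / (((n - i).+1)`!)%:R)) *: (s ^+ n * P ^+ n.+1))); last first.
  by move=> i _; rewrite /exp_term /expm1_div_term (termM hc) addnS subnKC // -ltnS.
by rewrite -scaler_suml R2.
Qed.


Lemma termM2 (a b : R) i j (u v : A) :
  (a *: (s ^+ i * u)) * (b *: (s ^+ j * v)) = (a * b) *: (s ^+ (i + j) * (u * v)).
Proof.
rewrite -scalerAl -scalerAr scalerA; congr (_ *: _).
rewrite exprD -!mulrA; congr (_ * _).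
by rewrite !mulrA (sexpC hc j).
Qed.

Lemma commXX (u v : A) a b : u * v = v * u -> u ^+ a * v ^+ b = v ^+ b * u ^+ a.
Proof. by move=> h; apply/commrX/commr_sym/commrX/commr_sym. Qed.

Lemma coprod_Pc (x y Pcx Pcy Pcxy : A) : x * y = y * x ->
  ssum s (expm1_div_term 1 s x) Pcx -> ssum s (expm1_div_term 1 s y) Pcy ->
  ssum s (expm1_div_term 1 s (y + x)) Pcxy ->
  Pcxy = Pcy + Pcx + s * (Pcx * Pcy).
Proof.
move=> hxy hx hy hxyS.
have h := ssum_cauchy hc (fun n => sdiv_term s _ x n _) (fun n => sdiv_term s _ y n _) hx hy.
have hcons := ssum_cons 0 (ssumMl hc s h); rewrite add0r in hcons.
apply: (ssum_unique hsep hxyS); apply: ssum_ext (ssumD (ssumD hy hx) hcons) => n.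
rewrite /expm1_div_term.
case: n => [|m].
  by rewrite !expr0 !expr1 !mul1r scalerDr addr0.
have eT : (y + x) ^+ m.+2 = y ^+ m.+2 + (\sum_(k < m.+1)
     (y ^+ (m.+1 - k) * x ^+ k.+1) *+ 'C(m.+2, k.+1) + x ^+ m.+2).
  rewrite (exprDn_comm _ (esym hxy)) big_ord_recl big_ord_recr /=.
  by rewrite subn0 expr0 mulr1 bin0 mulr1n subnn expr0 mul1r binn mulr1n.
rewrite eT.
rewrite !mulrDr !scalerDr -!addrA; congr (_ + _).
rewrite addrC; congr (_ + _).
rewrite mulr_sumr mulr_sumr scaler_sumr; apply: eq_bigr => i _.
have hi : (i <= m)%N by rewrite -ltnS.
rewrite termM2 subnKC // -scalerAr [s * (_ * _)]mulrA -exprS.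
rewrite mulrnAr -scaler_nat scalerA.
rewrite subSn // (commXX _ _ hxy).
congr (_ *: _).
have hi2 : (i.+1 <= m.+2)%N by rewrite ltnS leqW.
rewrite (binR _ hi2) subSS subSn //; rewrite !expr1n; field.
by nzt.
Qed.

End Series2.

Section Lie2.
Variables (R : realType) (A : algType R).
Implicit Types x y z : A.
Lemma lieDr x y z : lie x (y + z) = lie x y + lie x z.
Proof. by rewrite /lie mulrDr mulrDl opprD addrACA. Qed.
Lemma lieDl x y z : lie (x + y) z = lie x z + lie y z.
Proof. by rewrite /lie mulrDr mulrDl opprD addrACA. Qed.
Lemma lieNr x y : lie x (- y) = - lie x y.
Proof. by rewrite /lie mulrN mulNr opprB opprK addrC. Qed.
Lemma lieBr x y z : lie x (y - z) = lie x y - lie x z.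
Proof. by rewrite lieDr lieNr. Qed.
Lemma lie_comm x y : x * y = y * x -> lie x y = 0.
Proof. by rewrite /lie => ->; rewrite subrr. Qed.
Lemma lie0 x y : lie x y = 0 -> x * y = y * x.
Proof. by move/lie_eq; rewrite addr0. Qed.
Lemma lie_sr (s x y : A) : central s -> lie x (s * y) = s * lie x y.
Proof. by move=> hc; rewrite /lie mulrBr !mulrA -(hc x). Qed.
Lemma lie_sl (s x y : A) : central s -> lie (s * x) y = s * lie x y.
Proof. by move=> hc; rewrite /lie mulrBr !mulrA -(hc y). Qed.
Lemma lie_self2 x : lie x (x ^+ 2) = 0.
Proof. by rewrite /lie expr2 mulrA subrr. Qed.
End Lie2.


Unset Implicit Arguments. Set Strict Implicit. Set Printing Implicit Defensive.

Lemma zF (V : zmodType) (c2 X A B C G H : V) :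
  c2 + X + (A + (B - C) + (B + G)) = c2 + A + (X + H) + B *+ 2 - (H - G + C).
Proof.
rewrite mulr2n opprD opprB.
rewrite -!addrA; congr (_ + _).
rewrite [X + _]addrCA; congr (_ + _); congr (_ + _).
rewrite (addrCA H B) (addrCA H B) (addrCA H G) addNKr; congr (_ + _).
by rewrite [LHS]addrCA [- C + G]addrC.
Qed.

Theorem mainTheorem6 (R : realType) (mu nu : R) (A : algType R) (s : A)
  (H P K D C1 C2 : A)
  (* E = e^{sP}, Ei = e^{-sP}, Pc = (e^{sP}-1)/s, Q = (1 - e^{-sP})/s, as s-adic sums *)
  (E Ei Pc Q : A) :
  sadic_algebra s ->
  ssum s (exp_term 1 s P) E ->
  ssum s (exp_term (-1) s P) Ei ->
  ssum s (expm1_div_term 1 s P) Pc ->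
  ssum s (expm1_div_term (-1) s P) Q ->
  (* defining relations of U_sigma(so_{mu,nu}(2,2)) *)
  lie K H = nu *: Pc ->
  lie K P = mu *: (Ei * H) ->
  lie H P = 0 ->
  lie K D = 0 ->
  lie D H = H ->
  lie D C1 = - C1 ->
  lie H C1 = - ((2 * nu) *: D) ->
  lie D P = Q ->
  lie D C2 = - C2 - mu *: (s * D ^+ 2) ->
  lie P C2 = (2 * mu) *: D ->
  lie K C1 = nu *: C2 + (mu * nu) *: (s * D ^+ 2) ->
  lie K C2 = mu *: C1 ->
  lie P C1 = - (Ei * K) - K * Ei ->
  lie H C2 = K *+ 2 + mu *: (s * (D * H + H * D)) ->
  lie C1 C2 = - (mu *: (s * (D * C1 + C1 * D))) ->
  let C2c := C2 + mu *: (s * D ^+ 2) in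
  (* undeformed relations *)
  (lie K H = nu *: Pc /\ lie K Pc = mu *: H /\ lie H Pc = 0 /\
   lie D H = H /\ lie D C1 = - C1 /\
   lie H C1 = - ((2 * nu) *: D) /\ lie D Pc = Pc /\ lie D C2c = - C2c /\
   lie Pc C2c = (2 * mu) *: D /\ lie K C1 = nu *: C2c /\ lie K C2c = mu *: C1 /\
   lie K D = 0 /\ lie H C2c = K *+ 2 /\ lie Pc C1 = - (K *+ 2) /\
   lie C1 C2c = 0)
  /\
  (* coproducts: for any s-adically complete algebra B (e.g. the completed
     tensor product U_sigma (x) U_sigma) with commuting embeddings
     i1 x = x (x) 1, i2 y = 1 (x) y, and Delta the algebra map with the given
     values on generators *)
  (forall (B : algType R) (sB : B) (Delta i1 i2 : A -> B) (w : A),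
    sadic_algebra sB ->
    alg_hom Delta -> alg_hom i1 -> alg_hom i2 ->
    Delta s = sB -> i1 s = sB -> i2 s = sB ->
    (forall x y, i1 x * i2 y = i2 y * i1 x) ->
    Delta P = i2 P + i1 P ->
    Delta D = i2 D + i1 D * i2 Ei ->
    Delta H = i2 H + i1 H * i2 E ->
    Delta C2 = i2 C2 + i1 C2 * i2 Ei ->
    Delta K = i2 K + i1 K - mu *: (sB * (i1 D * i2 (Ei * H))) ->
    Delta C1 = i2 C1 + i1 C1 * i2 Ei - (sB * (i1 D * i2 (Ei * K))) *+ 2
               + mu *: (sB ^+ 2 * (i1 (D ^+ 2 + D) * i2 (Ei ^+ 2 * H))) ->
    (* w = 1/(1 + s Pc) *)
    (1 + s * Pc) * w = 1 -> w * (1 + s * Pc) = 1 ->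
    (Delta Pc = i2 Pc + i1 Pc + sB * (i1 Pc * i2 Pc) /\
        Delta H = i2 H + i1 H + sB * (i1 H * i2 Pc) /\
        Delta D = i2 D + i1 D * i2 w /\
        Delta K = i2 K + i1 K - mu *: (sB * (i1 D * i2 (H * w))) /\
        Delta C1 = i2 C1 + i1 C1 * i2 w - (sB * (i1 D * i2 (w * K))) *+ 2
                   + mu *: (sB ^+ 2 * (i1 (D ^+ 2 + D) * i2 (H * w ^+ 2))) /\
        Delta C2c = i2 C2c + i1 C2c * i2 w + (mu *: (sB * (i1 D * i2 (w * D)))) *+ 2
                   - mu *: (sB * (i1 (D ^+ 2 + D) * i2 (s * Pc * w ^+ 2))))).

Proof.
move=> hsa hE hEi hPc hQ hKH hKP hHP hKD hDH hDC1 hHC1 hDP hDC2 hPC2 hKC1 hKC2 hPC1 hHC2 hC1C2 C2c.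
case: hsa => hc hsep _.
have eE := shift_E hc hsep hE hPc.
have eEi := shift_Ei hc hsep hEi hQ.
have hEEi := EEi hc hsep hE hEi.
have hEQ := EQ_Pc hc hsep hE hQ hPc.
have comP : forall Y, Y * P = P * Y ->
    [/\ Y * E = E * Y, Y * Ei = Ei * Y, Y * Pc = Pc * Y & Y * Q = Q * Y].
  move=> Y hY; split;
    [apply: (ssum_commute hc hsep _ hE)|apply: (ssum_commute hc hsep _ hEi)
    |apply: (ssum_commute hc hsep _ hPc)|apply: (ssum_commute hc hsep _ hQ)] => n;
    rewrite /exp_term /expm1_div_term; exact: (termC hc _ _ _ hY).
have [cPE cPEi cPPc cPQ] := comP P erefl.
have [cHE cHEi cHPc cHQ] := comP H (lie0 hHP).
have [cEE cEEi cEPc cEQ] := comP E (esym cPE).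
have [cQE cQEi cQPc cQQ] := comP Q (esym cPQ).
have hEiE : Ei * E = 1 by rewrite -cEEi.
have hZK : P * (mu *: (Ei * H)) = (mu *: (Ei * H)) * P.
  by rewrite -scalerAr -scalerAl mulrA cPEi -mulrA -(lie0 hHP) mulrA.
have hKEi := lie_Ei hc hsep hKP hZK hEi.
have hDEi := lie_Ei hc hsep hDP cPQ hEi.
have hKPc := lie_Pc hc hsep hKP hZK hE hPc.
have hDPc := lie_Pc hc hsep hDP cPQ hE hPc.
have hPK : lie P K = - (mu *: (Ei * H)) by rewrite lieN hKP.
have hPD : lie P D = - Q by rewrite lieN hDP.
have hPEi : lie P Ei = 0 by apply: lie_comm.
have hsQ : s * Q = 1 - Ei by rewrite eEi opprB addrC subrK.
have hHD : lie H D = - H by rewrite lieN hDH.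
have hC1D : lie C1 D = C1 by rewrite lieN hDC1 opprK.
have hEsEi : forall X, E * (s * (Ei * X)) = s * X.
  by move=> X; rewrite mulrA -(hc E) -mulrA [E * (Ei * X)]mulrA hEEi mul1r.
have eDEi : D * Ei = Ei * D - s * (Ei * Q) by rewrite (lie_eq hDEi).
have eKEi : K * Ei = Ei * K - s * (Ei * (mu *: (Ei * H))) by rewrite (lie_eq hKEi).
split.
  split; first exact: hKH.
  split; first by rewrite hKPc -scalerAr mulrA hEEi mul1r.
  split; first exact: lie_comm cHPc.
  split; first exact: hDH.
  split; first exact: hDC1.
  split; first exact: hHC1.
  split; first by rewrite hDPc hEQ.
  split.
    by rewrite /C2c lieDr hDC2 lieZr (@lie_sr _ _ s _ _ hc) lie_self2 mulr0 scaler0 addr0 opprD.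
  split.
    have zA : forall (d a b : A), - ((d - a) + (d - b)) = a + b - d *+ 2.
      by move=> d a b; rewrite opprD !opprB addrACA -opprD mulr2n.
    have hsD : s * (- Q * D + D * - Q) = Ei * D + D * Ei - D *+ 2.
      rewrite mulNr mulrN -opprD mulrN mulrDr !mulrA (hc D) -[D * s * Q]mulrA hsQ.
      by rewrite mulrBl mul1r mulrBr mulr1 zA.
    have hPC2c : lie P C2c = mu *: (Ei * D + D * Ei).
      rewrite /C2c lieDr hPC2 lieZr (@lie_sr _ _ s _ _ hc) expr2 lieMr hPD hsD.
      have e : (2 * mu) *: D = mu *: (D *+ 2) by rewrite mulrC -scalerA scaler_nat.
      by rewrite e -scalerDr addrC subrK.
    have hPF : lie P (mu *: (Ei * D + D * Ei)) = (- (mu *: (Ei * Q))) *+ 2.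
      rewrite lieZr lieDr !lieMr hPEi hPD mul0r add0r mulr0 addr0.
      by rewrite mulrN mulNr cQEi -mulr2n -scalerMnr -scalerN.
    have hPG : P * (- (mu *: (Ei * Q))) = (- (mu *: (Ei * Q))) * P.
      rewrite mulrN mulNr -scalerAr -scalerAl; congr (- (_ *: _)).
      by apply/commrM.
    rewrite (lie2_Pc hc hsep hPC2c hPF hPG hE hPc).
    rewrite -scalerAr mulrDr [E * (Ei * D)]mulrA hEEi mul1r eDEi mulrBr [E * (Ei * D)]mulrA hEEi mul1r hEsEi.
    rewrite mulrN -scalerAr [E * (Ei * Q)]mulrA hEEi mul1r mulrN opprK -scalerAr.
    rewrite -scalerDr addrA subrK.
    by rewrite mulrC -scalerA scaler_nat mulr2n.
  split; first by rewrite hKC1 /C2c scalerDr scalerA mulrC.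
  split.
    rewrite /C2c lieDr hKC2 lieZr (@lie_sr _ _ s _ _ hc) expr2 lieMr hKD.
    by rewrite mul0r mulr0 addr0 mulr0 scaler0 addr0.
  split; first exact: hKD.
  split.
    rewrite /C2c lieDr hHC2 lieZr (@lie_sr _ _ s _ _ hc) expr2 lieMr hHD mulNr mulrN -opprD.
    by rewrite [H * D + _]addrC mulrN scalerN addrK.
  split.
    have hPF : lie P (- (Ei * K) - K * Ei) = (mu *: (Ei * (Ei * H))) *+ 2.
      rewrite lieBr lieNr !lieMr hPEi hPK mul0r add0r mulr0 addr0.
      by rewrite mulrN mulNr !opprK -scalerAr -scalerAl -[Ei * H * Ei]mulrA cHEi -mulr2n.
    have hPG : P * (mu *: (Ei * (Ei * H))) = (mu *: (Ei * (Ei * H))) * P.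
      rewrite -scalerAr -scalerAl; congr (_ *: _).
      by apply/commrM => //; apply/commrM => //; exact: esym (lie0 hHP).
    rewrite (lie2_Pc hc hsep hPC1 hPF hPG hE hPc).
    rewrite eKEi mulrBr mulrN [E * (Ei * K)]mulrA hEEi mul1r mulrBr.
    rewrite [E * (Ei * K)]mulrA hEEi mul1r hEsEi.
    rewrite -[E * (mu *: _)]scalerAr [E * (Ei * _)]mulrA hEEi mul1r.
    by rewrite opprB addrA addrAC addrK mulr2n opprD.
  rewrite /C2c lieDr hC1C2 lieZr (@lie_sr _ _ s _ _ hc) expr2 lieMr hC1D.
  by rewrite [C1 * D + _]addrC addNr.
move=> B sB Delta i1 i2 w hsaB hD h1 h2 hDs h1s h2s hcomm hXP hXD hXH hXC2 hXK hXC1 hw1 hw2.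
case: hsaB => hcB hsepB _.
have ew : w = Ei.
  have hwE : w * E = 1 by rewrite eE.
  by rewrite -[w]mulr1 -hEEi mulrA hwE mul1r.
subst w.
have hser : forall f : A -> B, alg_hom f -> f s = sB ->
    ssum sB (expm1_div_term 1 sB (f P)) (f Pc).
  move=> f hf hfs; apply: ssum_ext (ssum_hom hf hfs hPc) => n.
  by rewrite /expm1_div_term (homZ hf) (homM hf) !(homX hf) hfs.
split.
  apply: (coprod_Pc hcB hsepB (hcomm P P) (hser _ h1 h1s) (hser _ h2 h2s)).
  by rewrite -hXP; exact: hser _ hD hDs.
split.
  rewrite hXH eE (homD h2) (hom1 h2) (homM h2) h2s mulrDr mulr1 addrA.
  by rewrite [i1 H * (sB * _)]mulrA -(hcB (i1 H)) -mulrA.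
split; first exact: hXD.
split; first by rewrite hXK cHEi.
split; first by rewrite hXC1 (commrX 2 cHEi).
have hsPc : s * Pc = E - 1 by rewrite eE addrC addKr.
have hsPcEi : s * Pc * Ei ^+ 2 = Ei - Ei ^+ 2.
  by rewrite hsPc mulrBl mul1r expr2 mulrA hEEi mul1r.
have eDEi2 : D * Ei = Ei * D - (Ei - Ei ^+ 2).
  by rewrite eDEi mulrA (hc Ei) -mulrA hsQ mulrBr mulr1 expr2.
rewrite /C2c (homD hD) (homZ hD) (homM hD) (homX hD) hDs hXC2 hXD hsPcEi.
rewrite !(homD h1) !(homD h2) !(homZ h1) !(homZ h2) !(homM h1) !(homM h2) h1s h2s.
rewrite (homN h2) (homX h2) [i2 Ei ^+ 2]expr2.
have hd2e : i2 D * i2 Ei = i2 Ei * i2 D - (i2 Ei - i2 Ei * i2 Ei).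
  by rewrite -(homM h2) eDEi2 (homB h2) (homB h2) (homM h2) (homX h2) expr2.
have c12 := hcomm D D.
have c1e := hcomm D Ei.
set d1 := i1 D in hd2e c12 c1e *.
set d2 := i2 D in hd2e c12 c1e *.
set e := i2 Ei in hd2e c12 c1e *.
set c1 := i1 C2.
set c2 := i2 C2.
have hS : (d2 + d1 * e) ^+ 2 = d2 * d2 + (d1 * (e * d2) - d1 * (e - e * e))
    + (d1 * (e * d2) + d1 * d1 * (e * e)).
  rewrite expr2 mulrDl !mulrDr; congr (_ + _ + (_ + _)).
  - by rewrite mulrA -c12 -mulrA hd2e mulrBr mulrDr.
  - by rewrite -mulrA.
  by rewrite mulrA -[d1 * e * d1]mulrA -c1e !mulrA.
have eL : mu *: (sB * (d2 + d1 * e) ^+ 2) =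
    mu *: (sB * (d2 * d2)) + (mu *: (sB * (d1 * (e * d2))) - mu *: (sB * (d1 * (e - e * e))))
    + (mu *: (sB * (d1 * (e * d2))) + mu *: (sB * (d1 * d1 * (e * e)))).
  by rewrite hS !(mulrDr, mulrN, scalerDr, scalerN).
have eR1 : (c1 + mu *: (sB * (d1 * d1))) * e = c1 * e + mu *: (sB * (d1 * d1 * e)).
  by rewrite mulrDl -scalerAl -[sB * (d1 * d1) * e]mulrA.
have eR2 : mu *: (sB * ((d1 * d1 + d1) * (e + - (e * e)))) =
    mu *: (sB * (d1 * d1 * e)) - mu *: (sB * (d1 * d1 * (e * e)))
    + mu *: (sB * (d1 * (e - e * e))).
  by rewrite mulrDl mulrBr !(mulrDr, mulrN, scalerDr, scalerN).
rewrite eL eR1 eR2.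
exact: zF.
Qed.
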